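(* Let $G$ be a finite, connected, simple $3$-regular graph on more than $6$ vertices that is $4$-ordered. Then $G$ does not contain a square, i.e. $G$ has no cycle of length $4$.
   Context: A simple graph $G$ is called $k$-ordered if for every sequence $v_1,\ldots,v_k$ of $k$ distinct vertices of $G$ there exists a cycle in $G$ containing these $k$ vertices in the specified (cyclic) order. *)

(* Defs.v *)
From mathcomp Require Import all_boot.
Set Implicit Arguments. Unset Strict Implicit. Unset Printing Implicit Defensive.

Definition simple_graph (T : finType) (e : rel T) : Prop :=
  symmetric e /\ irreflexive e.

Definition is_graph_cycle (T : finType) (e : rel T) (c : seq T) : Prop :=
  [/\ 3 <= size c, uniq c & cycle e c].

Definition connected_graph (T : finType) (e : rel T) : Prop :=
  forall x y : T, connect e x y.

Definition regular (T : finType) (e : rel T) (d : nat) : Prop :=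
  forall x : T, #|[set y | e x y]| = d.

Definition k_ordered (T : finType) (e : rel T) (k : nat) : Prop :=
  forall vs : k.-tuple T, uniq vs ->
    exists c : seq T, is_graph_cycle e c /\ exists i, subseq vs (rot i c).

Definition has_square (T : finType) (e : rel T) : Prop :=
  exists c : seq T, is_graph_cycle e c /\ size c = 4.

(* Main.v *)
Require Import Defs.
From mathcomp Require Import all_boot.
Set Implicit Arguments. Unset Strict Implicit.

Lemma subseq_split (T : eqType) (x : T) s t :
  subseq (x :: s) t -> exists t1 t2, t = t1 ++ x :: t2 /\ subseq s t2.
Proof.
elim: t => [|y t IH] //=.
case: eqP => [<- H|_ /IH [t1 [t2 [-> H]]]].
  by exists [::], t.
by exists (y :: t1), t2.
Qed.

Lemma path_head (T : Type) (e : rel T) x s y t :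
  path e x (s ++ y :: t) -> e x (head y s).
Proof. by case: s => [|z s] /= /andP[]. Qed.

Lemma disj (T : eqType) (s1 s2 : seq T) x y :
  uniq (s1 ++ s2) -> x \in s1 -> y \in s2 -> x != y.
Proof.
rewrite cat_uniq => /and3P[_ /hasPn H _] xs ys.
apply/eqP => exy; subst; by move: (H y ys); rewrite /= xs.
Qed.

Lemma three_in_two (T : eqType) (p q x1 x2 x3 : T) :
  x1 \in [:: p; q] -> x2 \in [:: p; q] -> x3 \in [:: p; q] ->
  x1 != x2 -> x1 != x3 -> x2 != x3 -> False.
Proof.
rewrite !inE => /orP[]/eqP-> /orP[]/eqP-> /orP[]/eqP->; by rewrite ?eqxx.
Qed.

Lemma inner (T : eqType) (e : rel T) u w u' w' p q A B X Y :
  symmetric e -> (forall y, e u y -> y \in [:: p; q; u']) ->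
  (forall y, e w y -> y \in [:: p; q; w']) ->
  uniq (u :: A ++ w :: B ++ u' :: X ++ w' :: Y) ->
  cycle e (u :: A ++ w :: B ++ u' :: X ++ w' :: Y) -> False.
Proof.
move=> sym Nu Nw.
set S1 := rcons A w. set S2 := rcons B u'. set S3 := X ++ w' :: Y.
have -> : A ++ w :: B ++ u' :: X ++ w' :: Y = S1 ++ (S2 ++ S3).
  by rewrite /S1 /S2 /S3 !cat_rcons.
move=> /= /andP[_ U1].
have U2 : uniq (S2 ++ S3) by move: U1; rewrite cat_uniq => /and3P[].
rewrite rcons_path => /andP[P1 P2].
have h1 : e u (head w A).
  by move: P1; rewrite /S1 /S2 /S3 !cat_rcons; apply: path_head.
have h2 : e w (head u' B).
  move: P1; rewrite /S1 /S2 /S3 !cat_rcons cat_path => /andP[_].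
  by rewrite /= => /andP[_]; apply: path_head.
have h3 : e (last w' Y) u.
  by move: P2; rewrite /S1 /S2 /S3 !cat_rcons !last_cat /= last_cat /= last_cat.
have m1 : head w A \in S1 by rewrite /S1; case: A {S1 U1 P1 P2 h1} => [|a A] /=; rewrite ?mem_rcons !inE ?eqxx.
have m2 : head u' B \in S2 by rewrite /S2; case: B {S2 U1 U2 P1 P2 h2} => [|a B] /=; rewrite ?mem_rcons !inE ?eqxx.
have m3 : last w' Y \in S3.
  rewrite /S3 mem_cat; apply/orP; right.
  exact: mem_last.
have u'S2 : u' \in S2 by rewrite /S2 mem_rcons mem_head.
have w'S3 : w' \in S3 by rewrite /S3 mem_cat mem_head orbT.
have q1 : head w A \in [:: p; q].
  move: (Nu _ h1); rewrite !inE => /or3P[H|H|/eqP E]; rewrite ?H ?orbT //; exfalso.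
  have := @disj _ _ _ (head w A) u' U1 m1.
  by rewrite mem_cat u'S2 E eqxx => /(_ isT).
have q2 : head u' B \in [:: p; q].
  move: (Nw _ h2); rewrite !inE => /or3P[H|H|/eqP E]; rewrite ?H ?orbT //; exfalso.
  have := @disj _ _ _ (head u' B) w' U2 m2.
  by rewrite w'S3 E eqxx => /(_ isT).
have q3 : last w' Y \in [:: p; q].
  move: (Nu _ (etrans (sym _ _) h3)); rewrite !inE => /or3P[H|H|/eqP E]; rewrite ?H ?orbT //; exfalso.
  have := disj U2 u'S2 m3.
  by rewrite E eqxx.
apply: (three_in_two q1 q2 q3).
- by apply: (disj U1 m1); rewrite mem_cat m2.
- by apply: (disj U1 m1); rewrite mem_cat m3 orbT.
- exact: disj U2 m2 m3.
Qed.

Lemma cyc_key (T : eqType) (e : rel T) u w u' w' p q C :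
  symmetric e ->
  (forall y, e u y -> y \in [:: p; q; u']) ->
  (forall y, e w y -> y \in [:: p; q; w']) ->
  uniq C -> cycle e C -> subseq [:: u; w; u'; w'] C -> False.
Proof.
move=> sym Nu Nw uC cC /subseq_split [C1 [t2 [E1 S1]]].
move: S1 => /subseq_split [A [t3 [E2 S2]]].
move: S2 => /subseq_split [B [t4 [E3 S3]]].
move: S3 => /subseq_split [X [Y0 [E4 _]]].
subst.
move: uC cC; rewrite -(rot_uniq (size C1)) -(rot_cycle (size C1)) rot_size_cat.
have EE : (u :: A ++ w :: B ++ u' :: X ++ w' :: Y0) ++ C1 =
   u :: A ++ w :: B ++ u' :: X ++ w' :: (Y0 ++ C1).
  by rewrite /= -catA /= -catA /= -catA /=.
rewrite EE.
exact: inner sym Nu Nw.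
Qed.

Lemma uniq4 (T : eqType) (a b c d : T) : uniq [:: a; b; c; d] ->
  a != b /\ a != c /\ a != d /\ b != c /\ b != d /\ c != d.
Proof.
move=> /=; rewrite !inE !negb_or -!andbA => /and5P[h1 h2 h3 h4 /and3P[h5 h6 _]]; by do !split.
Qed.

Lemma adj_neq (T : finType) (e : rel T) x y : simple_graph e -> e x y -> x != y.
Proof. by case=> _ irr exy; apply/eqP=> E; subst; rewrite irr in exy. Qed.

Lemma deg_size (T : finType) (e : rel T) x (s : seq T) :
  regular e 3 -> uniq s -> all (e x) s -> size s <= 3.
Proof.
move=> reg /card_uniqP us al; rewrite -(reg x) -us.
apply: subset_leq_card; apply/subsetP => y ys; rewrite inE; exact: (allP al).
Qed.

Lemma nbr3 (T : finType) (e : rel T) x p q r :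
  regular e 3 -> uniq [:: p; q; r] -> e x p -> e x q -> e x r ->
  forall y, e x y -> y \in [:: p; q; r].
Proof.
move=> reg u ep eq er y ey; apply/negPn/negP => ny.
have := deg_size (x := x) (s := y :: [:: p; q; r]) reg.
rewrite /= ey ep eq er /=. move: u => /= -> /=. rewrite andbT. move: ny; rewrite !inE => -> /(_ isT isT).
by []. Qed.

Lemma third (T : finType) (e : rel T) x p q :
  regular e 3 -> exists r, [/\ e x r, r != p & r != q].
Proof.
move=> reg; case: (pickP (fun r => e x r && (r != p) && (r != q))).
  by move=> r /andP[/andP[]] *; exists r.
move=> H; exfalso.
have : #|[set y | e x y]| <= size [:: p; q].
  apply: leq_trans (card_size _); apply: subset_leq_card; apply/subsetP => y.
  rewrite inE !inE => ey; move: (H y); rewrite ey /=.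
  by case: eqP => //= _; case: eqP.
by rewrite reg.
Qed.

Lemma closed_small (T : finType) (e : rel T) (s : seq T) x0 :
  connected_graph e -> x0 \in s -> (forall x, x \in s -> forall y, e x y -> y \in s) ->
  #|T| <= size s.
Proof.
move=> conn x0s cl.
have all : forall y, y \in s.
  move=> y; have /connectP [pth pp ->] := conn x0 y.
  elim: pth x0 x0s pp => //= z pth IH x xs /andP[exz pz].
  exact: IH (cl _ xs _ exz) pz.
apply: leq_trans (card_size s); apply: subset_leq_card; apply/subsetP => y _.
exact: all.
Qed.

Lemma ko_key (T : finType) (e : rel T) u w u' w' p q :
  symmetric e -> k_ordered e 4 -> uniq [:: u; w; u'; w'] ->
  (forall y, e u y -> y \in [:: p; q; u']) ->
  (forall y, e w y -> y \in [:: p; q; w']) -> False.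
Proof.
move=> sym ko uq Nu Nw.
have [C [[_ uC cC] [i sub]]] := ko [tuple u; w; u'; w'] uq.
apply: (cyc_key sym Nu Nw (C := rot i C)) => //; by rewrite ?rot_uniq ?rot_cycle.
Qed.

Lemma sub3 (T : eqType) (e : rel T) (s : seq T) x p q r :
  (forall y, e x y -> y \in [:: p; q; r]) -> p \in s -> q \in s -> r \in s ->
  forall y, e x y -> y \in s.
Proof. by move=> N hp hq hr y /N; rewrite !inE => /or3P[]/eqP->. Qed.

Ltac dist := rewrite /= ?inE ?negb_or ?andbT; repeat (apply/andP; split);
  try (by []); try (by rewrite eq_sym).

Ltac bad := move=> /or3P[]/eqP E; subst; rewrite ?eqxx in *; done.

Lemma sq_chord (T : finType) (e : rel T) :
  simple_graph e -> connected_graph e -> regular e 3 -> 6 < #|T| -> k_ordered e 4 ->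
  forall a b c d, uniq [:: a; b; c; d] -> e a b -> e b c -> e c d -> e d a ->
  e a c -> False.
Proof.
move=> sg conn reg big ko a b c d uq eab ebc ecd eda eac.
have sym : symmetric e by case: sg.
have [ab [ac [ad [bc [bd cd]]]]] := uniq4 uq.
have eba : e b a by rewrite sym.
have ecb : e c b by rewrite sym.
have edc : e d c by rewrite sym.
have ead : e a d by rewrite sym.
have eca : e c a by rewrite sym.
have Na : forall y, e a y -> y \in [:: b; c; d] by apply: nbr3 reg _ eab eac ead; dist.
have Nc : forall y, e c y -> y \in [:: b; d; a] by apply: nbr3 reg _ ecb ecd eca; dist.
case ebd: (e b d).
  have edb : e d b by rewrite sym.
  have Nb : forall y, e b y -> y \in [:: a; c; d] by apply: nbr3 reg _ eba ebc ebd; dist.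
  have Nd : forall y, e d y -> y \in [:: a; c; b] by apply: nbr3 reg _ eda edc edb; dist.
  have : #|T| <= size [:: a; b; c; d].
    apply: (closed_small conn (mem_head a _)) => x; rewrite !inE => /or4P[]/eqP->;
      [apply: (sub3 Na)|apply: (sub3 Nb)|apply: (sub3 Nc)|apply: (sub3 Nd)];
      by rewrite !inE eqxx ?orbT.
  by move=> /(leq_trans big).
have [b' [ebb' b'a b'c]] := third b a c reg.
have [d' [edd' d'a d'c]] := third d a c reg.
have b'd : b' != d by apply/eqP=> E; move: ebb'; rewrite E ebd.
have d'b : d' != b by apply/eqP=> E; move: edd'; rewrite E sym ebd.
have bb' : b != b' := adj_neq sg ebb'.
have dd' : d != d' := adj_neq sg edd'.
have Nb : forall y, e b y -> y \in [:: a; c; b'] by apply: nbr3 reg _ eba ebc ebb'; dist.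
have Nd : forall y, e d y -> y \in [:: a; c; d'] by apply: nbr3 reg _ eda edc edd'; dist.
case: (b' =P d') => [E|/eqP ne].
  subst d'.
  have eb'b : e b' b by rewrite sym.
  have eb'd : e b' d by rewrite sym.
  have [y [eb'y yb yd]] := third b' b d reg.
  have b'y : b' != y := adj_neq sg eb'y.
  have Nz : forall x, e b' x -> x \in [:: b; d; y] by apply: nbr3 reg _ eb'b eb'd eb'y; dist.
  have Na' : forall x, e a x -> x \in [:: b; d; c] by apply: nbr3 reg _ eab ead eac; dist.
  have ay : a != y.
    apply/eqP=> E; subst y; move: (Na _ (etrans (sym _ _) eb'y)); rewrite !inE.
    by rewrite (negbTE b'c) (eq_sym b' b) (negbTE bb') (negbTE b'd).
  have cy : c != y.
    apply/eqP=> E; subst y; move: (Nc _ (etrans (sym _ _) eb'y)); rewrite !inE.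
    by rewrite (negbTE b'a) (eq_sym b' b) (negbTE bb') (negbTE b'd).
  apply: (ko_key sym ko (u := a) (w := b') (u' := c) (w' := y) (p := b) (q := d)) => //.
  dist.
apply: (ko_key sym ko (u := b) (w := d) (u' := b') (w' := d') (p := a) (q := c)) => //.
dist.
Qed.

Lemma sq_nochord (T : finType) (e : rel T) :
  simple_graph e -> connected_graph e -> regular e 3 -> 6 < #|T| -> k_ordered e 4 ->
  forall a b c d, uniq [:: a; b; c; d] -> e a b -> e b c -> e c d -> e d a ->
  ~~ e a c -> ~~ e b d -> False.
Proof.
move=> sg conn reg big ko a b c d uq eab ebc ecd eda nac nbd.
have sym : symmetric e by case: sg.
have [ab [ac [ad [bc [bd cd]]]]] := uniq4 uq.
have eba : e b a by rewrite sym.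
have ecb : e c b by rewrite sym.
have edc : e d c by rewrite sym.
have ead : e a d by rewrite sym.
have [a' [eaa' a'b a'd]] := third a b d reg.
have [c' [ecc' c'b c'd]] := third c b d reg.
have aa' : a != a' := adj_neq sg eaa'.
have cc' : c != c' := adj_neq sg ecc'.
have a'c : a' != c by apply/eqP=> E; move: eaa' nac; rewrite E => ->.
have c'a : c' != a by apply/eqP=> E; move: ecc' nac; rewrite E sym => ->.
have Na : forall y, e a y -> y \in [:: b; d; a'] by apply: nbr3 reg _ eab ead eaa'; dist.
have Nc : forall y, e c y -> y \in [:: b; d; c'] by apply: nbr3 reg _ ecb ecd ecc'; dist.
case: (a' =P c') => [E|/eqP ne]; last first.
  apply: (ko_key sym ko (u := a) (w := c) (u' := a') (w' := c') (p := b) (q := d)) => //.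
  dist.
subst c'.
have [b' [ebb' b'a b'c]] := third b a c reg.
have [d' [edd' d'a d'c]] := third d a c reg.
have bb' : b != b' := adj_neq sg ebb'.
have dd' : d != d' := adj_neq sg edd'.
have b'd : b' != d by apply/eqP=> E; move: ebb' nbd; rewrite E => ->.
have d'b : d' != b by apply/eqP=> E; move: edd' nbd; rewrite E sym => ->.
have Nb : forall y, e b y -> y \in [:: a; c; b'] by apply: nbr3 reg _ eba ebc ebb'; dist.
have Nd : forall y, e d y -> y \in [:: a; c; d'] by apply: nbr3 reg _ eda edc edd'; dist.
case: (b' =P d') => [E|/eqP ne]; last first.
  apply: (ko_key sym ko (u := b) (w := d) (u' := b') (w' := d') (p := a) (q := c)) => //.
  dist.
subst d'.
have ea'a : e a' a by rewrite sym.
have ea'c : e a' c by rewrite sym.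
have eb'b : e b' b by rewrite sym.
have eb'd : e b' d by rewrite sym.
have a'b' : a' != b'.
  apply/eqP=> E; subst b'.
  have := deg_size (x := a') (s := [:: a; b; c; d]) reg uq.
  by rewrite /= ea'a ea'c eb'b eb'd => /(_ isT).
case ez: (e a' b').
  have eb'a' : e b' a' by rewrite sym.
  have Na' : forall y, e a' y -> y \in [:: a; c; b'] by apply: nbr3 reg _ ea'a ea'c ez; dist.
  have Nb' : forall y, e b' y -> y \in [:: b; d; a'] by apply: nbr3 reg _ eb'b eb'd eb'a'; dist.
  have : #|T| <= size [:: a; b; c; d; a'; b'].
    apply: (closed_small conn (mem_head a _)) => x;
      rewrite !inE => /orP[/eqP->|/orP[/eqP->|/orP[/eqP->|/orP[/eqP->|/orP[/eqP->|/eqP->]]]]];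
      [apply: (sub3 Na)|apply: (sub3 Nb)|apply: (sub3 Nc)|apply: (sub3 Nd)|apply: (sub3 Na')|apply: (sub3 Nb')];
      by rewrite !inE eqxx ?orbT.
  by move=> /(leq_trans big).
have [y [eb'y yb yd]] := third b' b d reg.
have b'y : b' != y := adj_neq sg eb'y.
have Nb' : forall x, e b' x -> x \in [:: b; d; y] by apply: nbr3 reg _ eb'b eb'd eb'y; dist.
have ay : a != y.
  apply/eqP=> E; subst y; move: (Na _ (etrans (sym _ _) eb'y)); rewrite !inE.
  by rewrite (eq_sym b' b) (negbTE bb') (negbTE b'd) (eq_sym b' a') (negbTE a'b').
have a'y : a' != y by apply/eqP=> E; move: eb'y ez; rewrite -E sym => ->.
apply: (ko_key sym ko (u := a) (w := b') (u' := a') (w' := y) (p := b) (q := d)) => //.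
dist.
Qed.

Theorem theorem2p1 (T : finType) (e : rel T) :
  simple_graph e -> connected_graph e -> regular e 3 -> 6 < #|T| ->
  k_ordered e 4 -> ~ has_square e.
Proof.
move=> sg conn reg big ko [cy [[sz uq cyc] s4]].
case: cy sz uq cyc s4 => [|a [|b [|c [|d [|? ?]]]]] //= _ uq.
rewrite andbT => /and4P[eab ebc ecd eda] _.
have uq' : uniq [:: a; b; c; d] by [].
case eac: (e a c).
  exact: (sq_chord sg conn reg big ko uq' eab ebc ecd eda eac).
case ebd: (e b d).
  have [ab [ac [ad [bc [bd cd]]]]] := uniq4 uq'.
  apply: (sq_chord sg conn reg big ko (a := b) (b := c) (c := d) (d := a)) => //.
  dist.
exact: (sq_nochord sg conn reg big ko uq' eab ebc ecd eda (negbT eac) (negbT ebd)).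
Qed.
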